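(* Let $\mathcal{B}=(T,\bowtie,\ell)$ be a homogeneous block with $\ell\equiv 1$, and let $c:T\to\{1,\dots,k\}$ be a minimal proper vertex coloring of the conflict graph $(T,\bowtie)$ (so $k$ is its chromatic number), produced by any correct minimal vertex coloring algorithm. Then $\mathcal S=\mathrm{LevelSchedule}(c^{-1}(1),\dots,c^{-1}(k))$ is an optimal schedule of $\mathcal{B}$, i.e., $\mathcal S$ is valid and $\mathrm{Lt}_{\ell}(\mathcal S)=\mathrm{MinLt}_{\ell}(\mathcal{B})$.
   Context: A block consists of a finite set $T$ of transactions, a symmetric irreflexive conflict relation $\bowtie$, and a length function $\ell:T\to\mathbb{N}_{>0}$. A schedule is a set $\mathcal S\subseteq T\times T$ with $(T,\mathcal S)$ acyclic; it is valid if every conflicting pair is joined by a directed path in $(T,\mathcal S)$ in one direction or the other. $\mathrm{Lt}_\ell(\mathcal S)$ is the maximum over directed simple paths $P$ (including single vertices) of $\sum_{v\in P}\ell(v)$; $\mathrm{MinLt}_\ell(\mathcal{B})$ is its minimum over valid schedules. $\mathrm{LevelSchedule}(B_1,\dots,B_k)$ for an ordered partition of $T$ into conflict-free sets: set $B_0=\emptyset$, $\mathcal S=\emptyset$; for $i=1,\dots,k$ and, for each $i$, for $j=i-1,\dots,0$ (decreasing): let $E=\{(u,v)\in B_j\times B_i: u\bowtie v\}$, let $P$ be the set of pairs $(x,y)$ with a directed path from $x$ to $y$ in the current $(T,\mathcal S)$, and set $\mathcal S\leftarrow\mathcal S\cup(E\setminus P)$; output $\mathcal S$. *)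

(* Defs.v *)
From mathcomp Require Import all_boot.
Set Implicit Arguments. Unset Strict Implicit. Unset Printing Implicit Defensive.

Section Block.
Variable T : finType.
Variable conf : rel T.

Definition srel (S : {set T * T}) : rel T := fun x y => (x, y) \in S.

Definition acyclic (S : {set T * T}) : bool :=
  [forall x, forall y, ((x, y) \in S) ==> ~~ connect (srel S) y x].

Definition is_schedule (S : {set T * T}) : bool := acyclic S.

Definition valid (S : {set T * T}) : bool :=
  [forall u, forall v, conf u v ==> (connect (srel S) u v || connect (srel S) v u)].

(* Lt: max over directed simple paths x :: p (including single vertices)
   of the total length. A simple path has at most #|T| vertices. *)
Definition Lt (l : T -> nat) (S : {set T * T}) : nat :=
  \max_(n < #|T|) \max_(x : T)
     \max_(p : (n.-tuple T) | path (srel S) x p && uniq (x :: p))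
        (l x + \sum_(y <- p) l y).

(* MinLt: minimum of Lt over valid schedules.  The initial value
   \sum_x l x is an upper bound of Lt S for every S (simple paths), and
   valid schedules always exist, so this is the true minimum. *)
Definition MinLt (l : T -> nat) : nat :=
  \big[minn / (\sum_(x : T) l x)]_(S : {set T * T} | is_schedule S && valid S) Lt l S.

(* One inner step of LevelSchedule: add E \ P, P computed on the current S. *)
Definition level_step (S : {set T * T}) (Bj Bi : {set T}) : {set T * T} :=
  S :|: [set uv : T * T | [&& uv.1 \in Bj, uv.2 \in Bi, conf uv.1 uv.2
                             & ~~ connect (srel S) uv.1 uv.2]].

(* LevelSchedule(B_1,...,B_k), with Bs = [:: B_1; ...; B_k] and B_0 = set0. *)
Definition LevelSchedule (Bs : seq {set T}) : {set T * T} :=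
  let B := fun j => nth set0 (set0 :: Bs) j in
  foldl (fun S i =>
           foldl (fun S j => level_step S (B j) (B i)) S (rev (iota 0 i)))
        set0 (iota 1 (size Bs)).

(* proper vertex coloring with colors 'I_k (i.e. 1..k shifted to 0..k-1) *)
Definition proper_coloring (k : nat) (c : T -> 'I_k) : Prop :=
  forall x y, conf x y -> c x != c y.

Definition minimal_coloring (k : nat) (c : T -> 'I_k) : Prop :=
  proper_coloring c /\
  forall (k' : nat) (c' : T -> 'I_k'), proper_coloring c' -> k <= k'.

Definition color_classes (k : nat) (c : T -> 'I_k) : seq {set T} :=
  [seq [set x | c x == i] | i <- enum 'I_k].

End Block.

(* Main.v *)
Require Import Defs.
From mathcomp Require Import all_boot.
From mathcomp Require Import zify.
Set Implicit Arguments. Unset Strict Implicit.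

Section Aux.
Variable T : finType.

Lemma foldl_inv (A : Type) (B : eqType) (f : A -> B -> A) (P : A -> Prop)
  (s : seq B) (a : A) :
  P a -> (forall a b, b \in s -> P a -> P (f a b)) -> P (foldl f a s).
Proof.
elim: s a => [|b s IH] a //= Pa H; apply: IH.
  by apply: H => //; rewrite in_cons eqxx.
by move=> a' b' hb; apply: H; rewrite in_cons hb orbT.
Qed.

Lemma foldl_sub (B : eqType) (f : {set T * T} -> B -> {set T * T}) (s : seq B) (a : {set T * T}) :
  (forall (a : {set T * T}) b, a \subset f a b) -> a \subset foldl f a s.
Proof.
move=> H; apply: (@foldl_inv _ _ f (fun S => a \subset S)) => // a' b _ h.
exact: subset_trans h (H _ _).
Qed.

Lemma connect_mono (S S' : {set T * T}) u v :
  S \subset S' -> connect (srel S) u v -> connect (srel S') u v.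
Proof.
move=> HS; apply: connect_sub => x y h; apply: connect1.
exact: (subsetP HS).
Qed.

Lemma foldl_conn (B : eqType) (f : {set T * T} -> B -> {set T * T}) (s : seq B) (a : {set T * T}) b u v :
  (forall (a : {set T * T}) b, a \subset f a b) -> b \in s ->
  (forall a', connect (srel (f a' b)) u v) -> connect (srel (foldl f a s)) u v.
Proof.
move=> H hb hc; case/splitPr: s / hb => s1 s2.
rewrite foldl_cat /=; apply: connect_mono (hc (foldl f a s1)).
exact: foldl_sub.
Qed.

Lemma acyclic_uniq (S : {set T * T}) x p :
  acyclic S -> path (srel S) x p -> uniq (x :: p).
Proof.
move=> hA; elim: p x => [|y p IH] x //= /andP[hxy hp].
have := IH y hp => /= ->; rewrite andbT.
apply/negP => hx.
have hc : connect (srel S) y x := path_connect hp hx.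
move/forallP: hA => /(_ x)/forallP/(_ y)/implyP/(_ hxy).
by rewrite hc.
Qed.

Definition hgt (S : {set T * T}) (x : T) : nat :=
  \max_(n < #|T|) \max_(p : n.-tuple T | path (srel S) x p && uniq (x :: p)) n.

Lemma size_lt_card x (w : seq T) : uniq (x :: w) -> size w < #|T|.
Proof.
move=> hu; have := max_card (mem (x :: w)).
by rewrite (card_uniqP hu).
Qed.

Lemma hgt_ge S x (w : seq T) :
  path (srel S) x w -> uniq (x :: w) -> size w <= hgt S x.
Proof.
move=> hp hu; have hs := size_lt_card hu.
rewrite /hgt; apply: (bigmax_sup (Ordinal hs)) => //.
by apply: (bigmax_sup (in_tuple w : (Ordinal hs).-tuple T)) => //=; apply/andP; split=> //; exact: hu.
Qed.

Lemma hgt_le S x m :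
  (forall w, path (srel S) x w -> uniq (x :: w) -> size w <= m) -> hgt S x <= m.
Proof.
move=> H; apply/bigmax_leqP => n _; apply/bigmax_leqP => p /andP[hp hu].
by have := H p hp hu; rewrite size_tuple.
Qed.

Lemma Lt_ge l S x (w : seq T) :
  path (srel S) x w -> uniq (x :: w) -> l x + \sum_(y <- w) l y <= Lt l S.
Proof.
move=> hp hu; have hs := size_lt_card hu.
rewrite /Lt; apply: (bigmax_sup (Ordinal hs)) => //.
apply: (bigmax_sup x) => //.
by apply: (bigmax_sup (in_tuple w : (Ordinal hs).-tuple T)) => //=; apply/andP; split=> //; exact: hu.
Qed.

Lemma Lt_le l S m :
  (forall (x : T) (w : seq T), path (srel S) x w -> uniq (x :: w) -> l x + \sum_(y <- w) l y <= m) ->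
  Lt l S <= m.
Proof.
move=> H; apply/bigmax_leqP => n _; apply/bigmax_leqP => x _.
apply/bigmax_leqP => p /andP[hp hu]; exact: H.
Qed.

Lemma sum_one (l : T -> nat) (w : seq T) : (forall x, l x = 1) ->
  \sum_(y <- w) l y = size w.
Proof. by move=> h; rewrite (eq_bigr (fun _ => 1)) // sum1_size. Qed.

Lemma hgt_lt l S x : (forall x, l x = 1) -> hgt S x < Lt l S.
Proof.
move=> hl.
have h1 : 1 <= Lt l S.
  by have := @Lt_ge l S x [::] isT isT; rewrite big_nil hl.
have h2 : hgt S x <= (Lt l S).-1.
  apply: hgt_le => w hp hu; have := Lt_ge l hp hu.
  rewrite sum_one // hl; lia.
lia.
Qed.

Lemma hgt_conn S u v : acyclic S -> connect (srel S) u v -> u != v ->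
  hgt S v < hgt S u.
Proof.
move=> hA /connectP [q hq hl] hne.
have H : forall w, path (srel S) v w -> uniq (v :: w) -> (size w).+1 <= hgt S u.
  move=> w hp _.
  have hp' : path (srel S) u (q ++ w) by rewrite cat_path hq -hl.
  have := hgt_ge hp' (acyclic_uniq hA hp').
  rewrite size_cat; case: q hq hl {hp'} => [|z q] _ hl /=.
    by rewrite hl eqxx in hne.
  lia.
have h1 := H [::] isT isT.
have h2 : hgt S v <= (hgt S u).-1 by apply: hgt_le => w hp hu; have := H w hp hu; lia.
lia.
Qed.

Lemma bigmin_le (I : eqType) (r : seq I) (P : pred I) (F : I -> nat) idx i :
  i \in r -> P i -> \big[minn/idx]_(j <- r | P j) F j <= F i.
Proof.
elim: r => //= a r IH; rewrite in_cons big_cons => /orP[/eqP<-|hi] hp.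
  by rewrite hp geq_minl.
case: (P a); last exact: IH.
exact: leq_trans (geq_minr _ _) (IH hi hp).
Qed.

End Aux.

Lemma memB (T : finType) k (c : T -> 'I_k) j x :
  x \in nth set0 (set0 :: color_classes c) j -> (c x).+1 = j.
Proof.
case: j => [|m] /=; first by rewrite in_set0.
rewrite /color_classes; case: (ltnP m k) => hm.
  rewrite (nth_map (c x)) ?size_enum_ord // inE => /eqP ->.
  by rewrite nth_enum_ord.
by rewrite nth_default ?in_set0 // size_map -cardE card_ord.
Qed.

Lemma memB_self (T : finType) k (c : T -> 'I_k) x :
  x \in nth set0 (set0 :: color_classes c) (c x).+1.
Proof.
rewrite /= /color_classes (nth_map (c x)) ?size_enum_ord //.
rewrite inE; apply/eqP/val_inj; by rewrite /= nth_enum_ord.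
Qed.

Lemma level_mono (T : finType) (conf : rel T) (B : nat -> {set T}) i (a : {set T * T}) :
  a \subset foldl (fun S j => level_step conf S (B j) (B i)) a (rev (iota 0 i)).
Proof. by apply: foldl_sub => a' b; apply: subsetUl. Qed.

Lemma level_edges (T : finType) (conf : rel T) k (c : T -> 'I_k) x y :
  (x, y) \in LevelSchedule conf (color_classes c) -> c x < c y.
Proof.
rewrite /LevelSchedule.
set P := fun S : {set T * T} => forall x y, (x, y) \in S -> c x < c y.
suff : P (foldl (fun S i =>
           foldl (fun S j => level_step conf S (nth set0 (set0 :: color_classes c) j)
              (nth set0 (set0 :: color_classes c) i)) S (rev (iota 0 i)))
        set0 (iota 1 (size (color_classes c)))) by apply.
apply: foldl_inv; first by move=> ? ?; rewrite in_set0.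
move=> a i _ Pa; apply: foldl_inv => // a' j hj Pa' u v.
rewrite /level_step !inE /= => /orP[/Pa'//|/and4P[hu hv _ _]].
move: hj; rewrite mem_rev mem_iota add0n => /andP[_ hj].
have := memB hu; have := memB hv; lia.
Qed.

Lemma path_last_le (T : finType) (e : rel T) (f : T -> nat) x p :
  (forall a b, e a b -> f a < f b) -> path e x p -> f x <= f (last x p).
Proof.
move=> H; elim: p x => [|y p IH] x //= /andP[hxy hp].
exact: leq_trans (ltnW (H _ _ hxy)) (IH _ hp).
Qed.

Theorem corollary1 (T : finType) (conf : rel T) (l : T -> nat)
  (conf_sym : symmetric conf) (conf_irr : irreflexive conf)
  (l_one : forall x, l x = 1)
  (k : nat) (c : T -> 'I_k) (c_min : minimal_coloring conf c) :
  let S := LevelSchedule conf (color_classes c) in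
  [/\ is_schedule S, valid conf S & Lt l S = MinLt conf l].
Proof.
move=> S.
have edges : forall x y, srel S x y -> c x < c y.
  by move=> x y; apply: level_edges.
have sched : is_schedule S.
  apply/forallP => x; apply/forallP => y; apply/implyP => hxy.
  apply/negP => /connectP [p hp hl].
  have := path_last_le edges hp; rewrite -hl.
  have := edges _ _ hxy; lia.
have conn_lt : forall u v, conf u v -> c u < c v -> connect (srel S) u v.
  move=> u v huv hlt; rewrite /S /LevelSchedule.
  apply: (@foldl_conn _ _ _ _ _ (c v).+1).
  - by move=> a b; apply: level_mono.
  - by rewrite size_map size_enum_ord mem_iota; have := ltn_ord (c v); lia.
  move=> a'; apply: (@foldl_conn _ _ _ _ _ (c u).+1).
  - by move=> a b; apply: subsetUl.
  - by rewrite mem_rev mem_iota add0n.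
  move=> a''; case: (boolP (connect (srel a'') u v)) => h.
    by apply: connect_mono h; apply: subsetUl.
  apply: connect1; rewrite /srel /level_step !inE /= huv h memB_self.
  by have := memB_self c v; rewrite /= => ->; rewrite orbT.
have hval : valid conf S.
  apply/forallP => u; apply/forallP => v; apply/implyP => huv.
  have hne := c_min.1 _ _ huv.
  case: (ltngtP (c u) (c v)) => h.
  - by rewrite conn_lt.
  - by rewrite (conn_lt v u) ?orbT // conf_sym.
  - by move: hne; rewrite (val_inj h) eqxx.
have LtS : Lt l S <= k.
  apply: Lt_le => x w hp hu; rewrite sum_one // l_one add1n.
  have hs : sorted (fun a b : 'I_k => val a < val b) (map c (x :: w)).
    rewrite /= path_map; apply: sub_path hp => a b; exact: edges.
  have hu' := sorted_uniq (fun y x z => @ltn_trans (val y) (val x) (val z))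
                 (fun a => ltnn (val a)) hs.
  have := max_card (mem (map c (x :: w))).
  by rewrite (card_uniqP hu') size_map card_ord.
have low : forall S', is_schedule S' && valid conf S' -> k <= Lt l S'.
  move=> S' /andP[hA hV].
  pose c' := fun x => Ordinal (hgt_lt S' x l_one).
  apply: c_min.2 (c') _ => x y hxy.
  have hne : x != y by apply/eqP => exy; rewrite exy conf_irr in hxy.
  move/forallP: hV => /(_ x)/forallP/(_ y)/implyP/(_ hxy)/orP[h|h].
    by rewrite /c' -val_eqE /= eq_sym ltn_eqF // hgt_conn.
  by rewrite /c' -val_eqE /= ltn_eqF // hgt_conn // eq_sym.
have kT : k <= #|T|.
  apply: c_min.2 (fun x => enum_rank x) _ => x y hxy.
  apply/eqP => /enum_rank_inj exy; by rewrite exy conf_irr in hxy.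
split => //; apply/eqP; rewrite eqn_leq; apply/andP; split.
  apply: (big_ind (fun m => Lt l S <= m)).
  - rewrite (eq_bigr (fun _ => 1)) // sum1_card; exact: leq_trans LtS kT.
  - by move=> a b ha hb; rewrite leq_min ha hb.
  - move=> S' hS'; exact: leq_trans LtS (low _ hS').
apply: bigmin_le; first exact: mem_index_enum.
by rewrite sched hval.
Qed.
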